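(* For any $\alpha\ge0$, almost surely $\bigcap_{n\ge1}\overline{T^\alpha_n}=\bigcap_{n\ge1}T^\alpha_n$.
   Context: Let $(X_j^i)_{j\ge 1,\,i\ge 0}$ be i.i.d. uniform on $\{-1,1\}$ and $(N_j(t),t\ge0)_{j\ge1}$ independent rate-$1$ Poisson processes independent of them; set $X_j(t)=X_j^i$ whenever $N_j(t)=i$ and $Z_n(t)=\sum_{k=1}^n\prod_{j=1}^k X_j(t)$. For $\alpha\ge0$ let $P^\alpha_n(t)=\{Z_i(t)\ge i^\alpha \ \forall i=1,\ldots,n\}$, $T^\alpha_n=\{t\in[0,1]:P^\alpha_n(t)\text{ holds}\}$, and $\overline{T^\alpha_n}$ its closure. *)

(* Defs.v *)
From HB Require Import structures.
From mathcomp Require Import all_boot all_order all_algebra.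
From mathcomp Require Import all_classical all_reals all_analysis.
Set Implicit Arguments. Unset Strict Implicit. Unset Printing Implicit Defensive.
Import Order.TTheory GRing.Theory Num.Theory.
Import numFieldNormedType.Exports.
Local Open Scope classical_set_scope.
Local Open Scope ring_scope.

(* Index of the underlying random variables:
   inl (j, i) : the sign X_j^i   (j >= 1, i >= 0)
   inr (j, k) : the k-th inter-arrival time of the Poisson process N_j (j >= 1, k >= 1) *)
Definition idx := ((nat * nat) + (nat * nat))%type.

Definition valid_idx (x : idx) : bool :=
  match x with
  | inl (j, _) => (1 <= j)%N
  | inr (j, k) => (1 <= j)%N && (1 <= k)%N
  end.

Definition mutually_independent {d} {T : measurableType d} {R : realType}
    (P : probability T R) {I : eqType} (J : pred I) (Y : I -> T -> R) : Prop :=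
  (forall i, J i -> measurable_fun setT (Y i)) /\
  forall (s : seq I) (B : I -> set R),
    uniq s -> all J s -> (forall i, measurable (B i)) ->
    P (\bigcap_(i in [set` s]) (Y i @^-1` B i)) =
    (\prod_(i <- s) P (Y i @^-1` B i))%E.

Section Model.
Context {d} {T : measurableType d} {R : realType}.
Variables (X : nat -> nat -> T -> R) (E : nat -> nat -> T -> R).

Definition rv_family (x : idx) : T -> R :=
  match x with inl (j, i) => X j i | inr (j, k) => E j k end.

Definition arrival (j i : nat) (w : T) : R := \sum_(1 <= m < i.+1) E j m w.

(* N_j(t) = the i with S_j(i) <= t < S_j(i+1)  (rate-1 Poisson process built
   from i.i.d. Exp(1) inter-arrival times; default 0 on the null set where no
   such i exists) *)
Definition poissonN (j : nat) (t : R) (w : T) : nat :=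
  xget 0%N [set i | arrival j i w <= t < arrival j i.+1 w].

Definition Xt (j : nat) (t : R) (w : T) : R := X j (poissonN j t w) w.

Definition Zn (n : nat) (t : R) (w : T) : R :=
  \sum_(1 <= k < n.+1) \prod_(1 <= j < k.+1) Xt j t w.

Definition Pevent (alpha : R) (n : nat) (t : R) (w : T) : Prop :=
  forall i : nat, (1 <= i <= n)%N -> (i%:R `^ alpha) <= Zn i t w.

Definition Tset (alpha : R) (n : nat) (w : T) : set R :=
  [set t | t \in `[0, 1] /\ Pevent alpha n t w].

End Model.

(* Main.v *)
Require Import Defs.
From HB Require Import structures.
From mathcomp Require Import all_boot all_order all_algebra.
From mathcomp Require Import all_classical all_reals all_analysis.
From mathcomp Require Import ring lra.
Import Order.TTheory GRing.Theory Num.Theory.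
Import numFieldNormedType.Exports.
Local Open Scope classical_set_scope.
Local Open Scope ring_scope.
Set Implicit Arguments. Unset Strict Implicit. Unset Printing Implicit Defensive.

Section Indep.
Context d (T : measurableType d) (R : realType) (P : probability T R)
  (I : eqType) (J : pred I) (Y : I -> T -> R).
Hypothesis HY : mutually_independent P J Y.

Definition Gen (Ex : pred I) : set (set T) :=
  [set A | exists s (B : I -> set R), [/\ uniq s, all J s, all (predC Ex) s,
     (forall i, measurable (B i)) & A = \bigcap_(i in [set` s]) (Y i @^-1` B i)]].

Lemma Y_meas i B : J i -> measurable B -> measurable (Y i @^-1` B).
Proof.
move=> Ji mB; have := (HY.1 i Ji) measurableT B mB; by rewrite setTI.
Qed.

Lemma Gen_meas Ex A : Gen Ex A -> measurable A.
Proof.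
move=> [s [B [us Js _ mB ->]]].
apply: fin_bigcap_measurable; first exact: finite_seq.
move=> i /= si; apply: Y_meas => //; exact: (allP Js).
Qed.

Lemma SA_meas Ex A : <<s Gen Ex >> A -> measurable A.
Proof.
apply: smallest_sub; first exact: sigma_algebra_measurable.
exact: Gen_meas.
Qed.

Lemma Gen_setI Ex : setI_closed (Gen Ex).
Proof.
move=> A1 A2 [s1 [B1 [u1 J1 E1 m1 ->]]] [s2 [B2 [u2 J2 E2 m2 ->]]].
exists (undup (s1 ++ s2)).
exists (fun i => (if i \in s1 then B1 i else setT) `&` (if i \in s2 then B2 i else setT)).
split.
- exact: undup_uniq.
- apply/allP => x; rewrite mem_undup mem_cat => /orP[] h.
  + exact: (allP J1).
  + exact: (allP J2).
- apply/allP => x; rewrite mem_undup mem_cat => /orP[] h.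
  + exact: (allP E1).
  + exact: (allP E2).
- move=> i; apply: measurableI; case: ifP => _ //.
- apply/seteqP; split => w /=.
  + move=> [h1 h2] i /=; rewrite mem_undup mem_cat => _ /=.
    split; case: ifPn => // hi; [exact: h1 | exact: h2].
  + move=> h; split => i /= hi.
    * have [] := h i; first by rewrite /= mem_undup mem_cat; apply/orP; left.
      by case: ifP => // /negbT /negP.
    * have [] := h i; first by rewrite /= mem_undup mem_cat; apply/orP; right.
      by move=> _; case: ifP => // /negbT /negP.
Qed.

Lemma ebar_lem (a b c e f : \bar R) : a \is a fin_num -> b \is a fin_num -> c \is a fin_num -> e \is a fin_num -> f \is a fin_num ->
  a = (c * f)%E -> b = (e * f)%E -> (a - b)%E = ((c - e) * f)%E.
Proof.
move=> _ _ hc he hf -> ->.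
rewrite muleBl //; exact: fin_num_adde_defr hc.
Qed.

Lemma Pfin A : measurable A -> P A \is a fin_num.
Proof. by move=> mA; apply: fin_num_measure. Qed.

Lemma indep_SA (Ex : pred I) x0 (B0 : set R) (C : set T) : J x0 -> Ex x0 -> measurable B0 -> <<s Gen Ex >> C ->
  P (C `&` Y x0 @^-1` B0) = (P C * P (Y x0 @^-1` B0))%E.
Proof.
move=> Jx0 Ex0 mB0.
set F := Y x0 @^-1` B0.
have mF : measurable F by exact: Y_meas.
pose H := [set C | measurable C /\ P (C `&` F) = (P C * P F)%E].
suff: <<s Gen Ex >> `<=` H by move=> h /h [].
apply: (@lambda_system_subset _ _ (@Gen_setI Ex) setT H) => //.
- split => //.
  + by split; [exact: measurableT | rewrite setTI probability_setT mul1e].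
  + move=> A B BA [mA hA] [mB hB]; split; first exact: measurableD.
    have -> : (A `\` B) `&` F = (A `&` F) `\` (B `&` F).
      by apply/seteqP; split => w /=; [move=> [[? ?] ?]; split => // -[]|move=> [[? ?] h]; split => //; split => // ?; apply: h].
    rewrite measureD; [|exact: measurableI|exact: measurableI|].
    2: by rewrite ltey_eq Pfin //; exact: measurableI.
    have -> : (A `&` F) `&` (B `&` F) = B `&` F.
      by apply/seteqP; split => w /=; [move=> [_ ?] //|move=> [? ?]; split => //; split => //; apply: BA].
    rewrite measureD //; last by rewrite ltey_eq Pfin.
    have -> : A `&` B = B by apply/seteqP; split => w /=; [case|move=> ?; split => //; apply: BA].
    apply: ebar_lem; [| | | | | exact: hA | exact: hB]; apply: Pfin => //; exact: measurableI.
  + move=> G ndG hG; split; first by apply: bigcup_measurable => n _; case: (hG n).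
    have mG n : measurable (G n) by case: (hG n).
    have c1 : (P \o (fun n => G n `&` F)) @ \oo --> P (\bigcup_n (G n `&` F)).
      apply: nondecreasing_cvg_mu.
      * by move=> n; exact: measurableI.
      * by apply: bigcup_measurable => n _; exact: measurableI.
      * by move=> m n mn; apply/subsetPset; apply: setSI; apply/subsetPset; exact: ndG.
    have c2 : (P \o G) @ \oo --> P (\bigcup_n G n).
      apply: nondecreasing_cvg_mu => //.
      by apply: bigcup_measurable => n _.
    have c3 : (P \o (fun n => G n `&` F)) @ \oo --> (P (\bigcup_n G n) * P F)%E.
      rewrite (_ : P \o _ = fun n => (P (G n) * P F)%E); last first.
        by apply: funext => n /=; case: (hG n).
      exact: cvgeZr (Pfin mF) c2.
    rewrite setI_bigcupl; exact: (cvg_unique _ c1 c3).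
- move=> A [s [B [us Js Es mB ->]]].
  split; first by apply: (@Gen_meas Ex); exists s, B; split.
  have x0s : x0 \notin s.
    by apply/negP => /(allP Es) /=; rewrite Ex0.
  pose B' := fun i => if i == x0 then B0 else B i.
  have -> : (\bigcap_(i in [set` s]) Y i @^-1` B i) `&` F =
            \bigcap_(i in [set` (x0 :: s)]) Y i @^-1` B' i.
    apply/seteqP; split => w /=.
    + move=> [h1 h2] i /=; rewrite inE => /orP[/eqP ->|si].
      * by rewrite /B' eqxx.
      * rewrite /B'; case: eqP => [ei|_]; last exact: h1.
        by move: si x0s; rewrite ei => ->.
    + move=> h; split.
      * move=> i /= si; have := h i; rewrite /= inE si orbT /B' => /(_ isT).
        by case: eqP => // ei; move: si x0s; rewrite ei => ->.
      * by have := h x0; rewrite /= inE eqxx /B' eqxx => /(_ isT).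
  rewrite HY.2 //=; last first.
    - by move=> i; rewrite /B'; case: eqP.
    - by rewrite Jx0.
    - by rewrite x0s.
  rewrite HY.2 // big_cons /B' eqxx muleC; congr (_ * _)%E.
  apply: eq_big_seq => i si; case: eqP => // ei.
  by move: si x0s; rewrite ei => ->.
Qed.

End Indep.

Section Model.
Context d (T : measurableType d) (R : realType) (P : probability T R)
  (X : nat -> nat -> T -> R) (E : nat -> nat -> T -> R).
Hypothesis Hind : mutually_independent P valid_idx (rv_family X E).

Definition ExX (k : nat) : pred idx :=
  fun x => if x is inl (k', _) then (k <= k')%N else false.

Definition GT (Ex : pred idx) := g_sigma_algebraType (Gen valid_idx (rv_family X E) Ex).

Lemma Y_SA (Ex : pred idx) x (B : set R) : valid_idx x -> ~~ Ex x -> measurable B ->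
  @measurable _ (GT Ex) (rv_family X E x @^-1` B).
Proof.
move=> vx nEx mB; apply: sub_sigma_algebra.
exists [:: x], (fun _ => B); split => //=; first by rewrite vx.
  by rewrite nEx.
apply/seteqP; split => w /=.
  by move=> h i /=; rewrite mem_seq1 => /eqP ->.
by move=> h; apply: (h x); rewrite /= mem_seq1.
Qed.

Lemma E_mfun k l : (1 <= k)%N -> (1 <= l)%N -> forall Ex : pred idx, Ex (inr (k, l)) = false ->
  measurable_fun (setT : set (GT Ex)) (E k l).
Proof.
move=> k1 l1 Ex hE _ B mB; rewrite setTI.
apply: (Y_SA (x:=inr (k,l))) => //=; first by rewrite k1 l1.
by rewrite hE.
Qed.

Definition noE (Ex : pred idx) := forall k l, Ex (inr (k, l)) = false.

Lemma arrival_mfun Ex k m : (1 <= k)%N -> noE Ex ->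
  measurable_fun (setT : set (GT Ex)) (arrival E k m).
Proof.
move=> k1 nE; elim: m => [|m IH].
  rewrite /arrival; under eq_fun do rewrite big_geq //.
  exact: measurable_cst.
rewrite /arrival; under eq_fun do rewrite big_nat_recr //=.
apply: measurable_realfun.measurable_funD => //.
exact: E_mfun.
Qed.

Lemma lt_SA Ex (f g : GT Ex -> R) : measurable_fun setT f -> measurable_fun setT g ->
  @measurable _ (GT Ex) [set w | f w < g w].
Proof.
move=> mf mg.
have := measurable_realfun.measurable_fun_ltr mf mg measurableT (Y := [set true]).
rewrite setTI; apply => //.
Qed.

Lemma le_SA Ex (f g : GT Ex -> R) : measurable_fun setT f -> measurable_fun setT g ->
  @measurable _ (GT Ex) [set w | f w <= g w].
Proof.
move=> mf mg.
have -> : [set w | f w <= g w] = ~` [set w | g w < f w].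
  by apply/seteqP; split => w /= h; [apply/negP; rewrite -leNgt | move/negP: h; rewrite -leNgt].
apply: measurableC; exact: lt_SA.
Qed.

Definition Aev (tau : T -> R) (k m : nat) : set T :=
  [set w | (forall l, (1 <= l <= m.+1)%N -> 0 < E k l w) /\
     arrival E k m w < tau w /\ tau w <= arrival E k m.+1 w].

Lemma Aev_SA Ex tau k m : (1 <= k)%N -> noE Ex -> measurable_fun (setT : set (GT Ex)) tau ->
  @measurable _ (GT Ex) (Aev tau k m).
Proof.
move=> k1 nE mt.
have -> : Aev tau k m = (\bigcap_(l in [set l | (1 <= l <= m.+1)%N]) (E k l @^-1` `]0, +oo[))
   `&` ([set w | arrival E k m w < tau w] `&` [set w | tau w <= arrival E k m.+1 w]).
  apply/seteqP; split => w /=.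
    move=> [h1 [h2 h3]]; split => //.
    move=> l /= hl; rewrite in_itv /= andbT; exact: h1.
  move=> [h1 [h2 h3]]; split => //.
  move=> l hl; have := h1 l hl; by rewrite /= in_itv /= andbT.
apply: measurableI; last (apply: measurableI).
- apply: bigcap_measurableType => l /= /andP[l1 _].
  have := E_mfun k1 l1 (nE k l) measurableT (Y := `]0, +oo[%classic).
  rewrite setTI; apply => //.
- apply: lt_SA => //; exact: arrival_mfun.
- apply: le_SA => //; exact: arrival_mfun.
Qed.

End Model.

Lemma step_arith (R : realType) (u v p : \bar R) (a1 a2 : R) : p \is a fin_num ->
  (u <= p * (2^-1 * a1)%:E)%E -> (v <= p * (2^-1 * a2)%:E)%E ->
  (u + v <= p * (2^-1 * (a1 + a2))%:E)%E.
Proof.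
move=> /fineK <- h1 h2; apply: le_trans (leeD h1 h2) _.
rewrite -!EFinM -EFinD lee_fin le_eqVlt; apply/orP; left; apply/eqP; ring.
Qed.

Fixpoint gw {R : realType} (r : nat) (h : R) : R :=
  match r with
  | 0 => 1
  | r'.+1 => ((if 1 <= h + 1 then gw r' (h + 1) else 0) +
              (if 1 <= h - 1 then gw r' (h - 1) else 0)) / 2
  end.

Lemma gw_ge0 (R : realType) r (h : R) : 0 <= gw r h.
Proof.
elim: r h => [|r IH] h /=; first exact: ler01.
apply: divr_ge0 => //; apply: addr_ge0; case: ifP => // _.
Qed.

Lemma gw_sym (R : realType) r (h c : R) : c = 1 \/ c = -1 ->
  2^-1 * ((if 1 <= h + c then gw r (h + c) else 0) + (if 1 <= h - c then gw r (h - c) else 0))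
  = gw r.+1 h.
Proof.
move=> [->|->] /=; first by rewrite mulrC.
by rewrite opprK addrC mulrC.
Qed.

Lemma cst_meas d' (T' : measurableType d') (b : bool) : measurable [set _ : T' | b].
Proof.
case: b.
  by rewrite (_ : [set _ | true] = setT) //; apply/seteqP; split.
by rewrite (_ : [set _ | false] = set0) //; apply/seteqP; split.
Qed.

Section Model3.
Context d (T : measurableType d) (R : realType) (P : probability T R)
  (X : nat -> nat -> T -> R) (E : nat -> nat -> T -> R).
Hypothesis Hind : mutually_independent P valid_idx (rv_family X E).
Hypothesis HX1 : forall j i, (1 <= j)%N -> P (X j i @^-1` [set 1]) = (2^-1)%:E.
Hypothesis HXm1 : forall j i, (1 <= j)%N -> P (X j i @^-1` [set -1]) = (2^-1)%:E.

Fixpoint V (tau : T -> R) (r k : nat) (h c : R) : set T :=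
  match r with
  | 0 => setT
  | r'.+1 => \bigcup_m (Aev E tau k m `&`
       ((X k m @^-1` [set 1] `&` [set _ | 1 <= h + c] `&` V tau r' k.+1 (h + c) c) `|`
        (X k m @^-1` [set -1] `&` [set _ | 1 <= h - c] `&` V tau r' k.+1 (h - c) (- c))))
  end.

Lemma arrival_mono k w a b : (forall l, (1 <= l <= b)%N -> 0 <= E k l w) -> (a <= b)%N ->
  arrival E k a w <= arrival E k b w.
Proof.
move=> hpos; elim: b hpos => [|b IH] hpos.
  by rewrite leqn0 => /eqP ->.
rewrite leq_eqVlt => /orP[/eqP ->//|]; rewrite ltnS => ab.
apply: le_trans (IH _ ab) _.
  by move=> l /andP[l1 lb]; apply: hpos; rewrite l1 /= (leq_trans lb).
rewrite /arrival [X in _ <= X]big_nat_recr //= lerDl; apply: hpos; by rewrite /= ltnS leqnn.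
Qed.

Lemma Aev_disj tau k m m' w : Aev E tau k m w -> Aev E tau k m' w -> m = m'.
Proof.
wlog: m m' / (m < m')%N.
  move=> H h1 h2; case: (ltngtP m m') => [lt|gt|//].
  - exact: H.
  - by apply/esym; apply: H.
move=> lt [p1 [a1 b1]] [p2 [a2 b2]]; exfalso.
have : arrival E k m.+1 w <= arrival E k m' w.
  apply: arrival_mono => // l /andP[l1 lb]; apply/ltW/p2.
  by rewrite l1 /= (leq_trans lb).
by move=> h; have := le_trans b1 h; rewrite leNgt a2.
Qed.

Lemma GT_mono (Ex Ex' : pred idx) A : (forall x, Ex' x -> Ex x) ->
  @measurable _ (GT X E Ex) A -> @measurable _ (GT X E Ex') A.
Proof.
move=> hEx; apply: sub_sigma_algebra2 => B [s [F [us Js Es mF ->]]].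
exists s, F; split => //; apply/allP => x xs /=.
by apply/negP => /hEx; move/allP: Es => /(_ x xs) /= /negP.
Qed.

Lemma noE_ExX k : noE (ExX k).
Proof. by []. Qed.

Lemma SAT (Ex : pred idx) (A : set T) : @measurable _ (GT X E Ex) A -> measurable A.
Proof. move=> h; exact (SA_meas Hind h). Qed.

Lemma Xpre_meas k m (s : R) : (1 <= k)%N -> measurable (X k m @^-1` [set s]).
Proof.
move=> k1; apply: (Y_meas Hind (i := inl (k, m))) => //.
Qed.

Lemma V_meas (tau : T -> R) (Htau : forall Ex, noE Ex -> measurable_fun (setT : set (GT X E Ex)) tau) r :
  forall k h c, (1 <= k)%N -> measurable (V tau r k h c).
Proof.
elim: r => [|r IH] k h c k1 /=; first exact: measurableT.
apply: bigcup_measurable => m _; apply: measurableI.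
  apply: (SAT (Ex := ExX k)); apply: Aev_SA => //; exact: Htau.
apply: measurableU; (apply: measurableI; [apply: measurableI; [exact: Xpre_meas|exact: cst_meas]|]);
  apply: IH; exact: leqW.
Qed.

Lemma V_bound (tau : T -> R)
  (Htau : forall Ex, noE Ex -> measurable_fun (setT : set (GT X E Ex)) tau) r :
  forall k h c (C : set T), (1 <= k)%N -> (c = 1 \/ c = -1) ->
  @measurable _ (GT X E (ExX k)) C ->
  (P (C `&` V tau r k h c) <= P C * (gw r h)%:E)%E.
Proof.
elim: r => [|r IH] k h c C k1 hc mC.
  by rewrite /= setIT mule1.
have mCT : measurable C by exact: (SAT mC).
have mA m : @measurable _ (GT X E (ExX k)) (Aev E tau k m).
  by apply: Aev_SA => //; exact: Htau.
have mCA m : @measurable _ (GT X E (ExX k)) (C `&` Aev E tau k m).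
  exact: measurableI.
have mCAT m : measurable (C `&` Aev E tau k m) by exact: (SAT (mCA m)).
have half m (s h' c' : R) : (s = 1 \/ s = -1) -> (c' = 1 \/ c' = -1) ->
    (P (C `&` Aev E tau k m `&`
       (X k m @^-1` [set s] `&` [set _ | (1 <= h')%R] `&` V tau r k.+1 h' c')) <=
     P (C `&` Aev E tau k m) * (2^-1 * (if (1 <= h')%R then gw r h' else 0))%R%:E)%E.
  move=> hs hc'.
  have HXs : P (X k m @^-1` [set s]) = (2^-1)%:E.
    by case: hs => ->; [exact: HX1|exact: HXm1].
  case: (boolP (1 <= h')) => hh.
  - rewrite (_ : [set _ : T | true] = setT); last by apply/seteqP; split.
    rewrite setIT setIA.
    apply: le_trans.
      apply: (IH k.+1 h' c') => //.
      apply: measurableI.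
        apply: (GT_mono (Ex := ExX k)) => //.
        by move=> [[k' i']|[k' i']] //=; apply: ltnW.
      apply: (Y_SA (x := inl (k, m))) => //=; by rewrite -ltnNge ltnSn.
    have -> : P (C `&` Aev E tau k m `&` X k m @^-1` [set s]) =
              (P (C `&` Aev E tau k m) * (2^-1)%:E)%E.
      rewrite -HXs.
      apply: (indep_SA Hind (Ex := ExX k) (x0 := inl (k, m)) (B0 := [set s])) => //=; last exact: (mCA m). 
    by rewrite -muleA -EFinM.
  - rewrite (_ : [set _ : T | false] = set0); last by apply/seteqP; split.
    rewrite setI0 set0I setI0.
    by rewrite measure0 mulr0 mule0.
rewrite /= setI_bigcupr.
set F := fun m => C `&` _.
have mF m : measurable (F m).
  apply: measurableI => //; apply: measurableI.
    exact: (SAT (mA m)).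
  apply: measurableU; (apply: measurableI; [apply: measurableI; [exact: Xpre_meas|exact: cst_meas]|]);
    apply: V_meas => //; exact: leqW.
have tF : trivIset setT F.
  move=> i j _ _ [w [[_ [hi _]] [_ [hj _]]]]; exact: Aev_disj hi hj.
rewrite (@measure_bigcup _ _ _ P setT F) //.
apply: le_trans.
  apply: (lee_nneseries (v := fun m => (P (C `&` Aev E tau k m) * (gw r.+1 h)%:E)%E)).
    by move=> i _ _; exact: measure_ge0.
  move=> m _; rewrite /F setIA setIUr measureU.
  - rewrite -(gw_sym r h hc); apply: step_arith.
    + exact: Pfin.
    + apply: half => //; by left.
    + apply: half => //; first by right.
      by case: hc => ->; [right|left; rewrite opprK].
  - apply: measurableI => //; (apply: measurableI; [apply: measurableI; [exact: Xpre_meas|exact: cst_meas]|]);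
      apply: V_meas => //; exact: leqW.
  - apply: measurableI => //; (apply: measurableI; [apply: measurableI; [exact: Xpre_meas|exact: cst_meas]|]);
      apply: V_meas => //; exact: leqW.
  - apply/seteqP; split => w // [[_ [[h1 _] _]] [_ [[h2 _] _]]].
    by move: h1 h2 => /= ->; move/eqP; rewrite -subr_eq0 opprK (_ : 1 + 1 = 2 :> R) // pnatr_eq0.
under eq_eseriesr do rewrite muleC.
rewrite nneseriesZl; last by move=> i _; exact: measure_ge0.
rewrite -(@measure_bigcup _ _ _ P setT (fun m => C `&` Aev E tau k m)) //; last first.
  move=> i j _ _ [w [[_ hi] [_ hj]]]; exact: Aev_disj hi hj.
rewrite muleC; apply: lee_wpmul2r; first by rewrite lee_fin gw_ge0.
apply: le_measure; rewrite ?inE //.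
  by apply: bigcup_measurable => m _.
by move=> w [m _ [? _]].
Qed.

End Model3.

Section GW.
Variable R : realType.

Lemma gw_step r (h : R) : gw r.+1 h <= gw r h.
Proof.
elim: r h => [|r IH] h.
  rewrite /= ler_pdivrMr // mul1r.
  by case: ifP => _; case: ifP => _; rewrite ?addr0 ?add0r ?ler1n //; lra.
rewrite [gw r.+2 h]/= [gw r.+1 h]/=.
rewrite ler_pM2r //; apply: lerD; case: ifP => _ //; exact: IH.
Qed.

Lemma gw_le1 r (h : R) : gw r h <= 1.
Proof.
elim: r h => [|r IH] h //.
exact: le_trans (gw_step _ _) (IH h).
Qed.

Lemma gw_noninc (h : R) : {homo (fun r => gw r h) : n m / (n <= m)%N >-> m <= n}.
Proof.
move=> n m /subnK <-.
elim: (m - n)%N => [|k IH] //.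
rewrite addSn; exact: le_trans (gw_step _ _) IH.
Qed.

Definition Gl (n : nat) : R := inf (range (fun r => gw r (n%:R : R))).

Lemma cG n : (fun r => gw r (n%:R : R)) @ \oo --> Gl n.
Proof.
apply: nonincreasing_cvgn; first exact: gw_noninc.
by exists 0 => _ [r _ <-]; exact: gw_ge0.
Qed.

Lemma gw_recS r n : gw r.+1 (n.+1%:R : R) =
  (gw r n.+2%:R + (if (1 <= n)%N then gw r n%:R else 0)) / 2.
Proof.
rewrite /= natr1 ler1n /= (_ : (n.+1%:R - 1 : R) = n%:R); last by rewrite -natr1 addrK.
by rewrite ler1n.
Qed.

Lemma gw_rec0 r : gw r.+1 (0 : R) = gw r 1 / 2.
Proof.
rewrite /= add0r lexx sub0r; case: ifP => [|_]; last by rewrite addr0. by move=> h; exfalso; move: h; apply/negP; rewrite -ltNge; lra.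
Qed.

Lemma Gl_lb n : has_lbound (range (fun r => gw r (n%:R : R))).
Proof. by exists 0 => _ [r _ <-]; exact: gw_ge0. Qed.

Lemma Gl_ge0 n : 0 <= Gl n.
Proof.
apply: lb_le_inf; first by exists (gw 0 (n%:R : R)), 0%N.
by move=> _ [r _ <-]; exact: gw_ge0.
Qed.

Lemma Gl_le1 n : Gl n <= 1.
Proof.
have := ge_inf (Gl_lb n) (x := gw 0 (n%:R : R)); rewrite /Gl /= => -> //.
by exists 0%N.
Qed.

Lemma Gl_rec n : Gl n.+1 = (Gl n.+2 + (if (1 <= n)%N then Gl n else 0)) / 2.
Proof.
have := @cG n.+1; rewrite -(cvg_shiftS (fun r => gw r (n.+1%:R : R))) => c1.
have c2 : (fun r => gw r.+1 (n.+1%:R : R)) @ \oo -->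
          (Gl n.+2 + (if (1 <= n)%N then Gl n else 0)) / 2.
  under eq_fun do rewrite gw_recS.
  apply: cvgMl; apply: cvgD; first exact: cG.
  case: ifP => _; [exact: cG | exact: cvg_cst].
exact: (cvg_unique _ c1 c2).
Qed.

Lemma Gl_rec0 : Gl 0 = Gl 1 / 2.
Proof.
have := @cG 0; rewrite -(cvg_shiftS (fun r => gw r (0%:R : R))) => c1.
have c2 : (fun r => gw r.+1 (0%:R : R)) @ \oo --> Gl 1 / 2.
  under eq_fun do rewrite gw_rec0.
  apply: cvgMl; exact: cG.
exact: (cvg_unique _ c1 c2).
Qed.

Lemma Gl_lin n : Gl n.+1 = n.+1%:R * Gl 1 /\ Gl n.+2 = n.+2%:R * Gl 1.
Proof.
elim: n => [|n [IH1 IH2]].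
  split; first by rewrite mul1r.
  have := Gl_rec 0; rewrite /= addr0 => h; lra.
split => //.
have := Gl_rec n.+1; rewrite /= IH1 IH2 => h.
have -> : Gl n.+3 = 2 * (n.+2%:R * Gl 1) - n.+1%:R * Gl 1 by rewrite h; lra.
rewrite -[n.+3]addn1 -[n.+2]addn1 -[n.+1]addn1 !natrD; lra.
Qed.

Lemma Gl1_0 : Gl 1 = 0.
Proof.
apply/eqP; rewrite eq_le Gl_ge0 andbT; rewrite leNgt; apply/negP => g1.
have := truncnS_gt (1 / Gl 1); set n := Num.Def.trunc _ => hn.
have := (Gl_lin n).1; have := Gl_le1 n.+1 => h1 h2.
rewrite h2 in h1.
have : 1 < n.+1%:R * Gl 1 by rewrite -ltr_pdivrMr.
lra.
Qed.

Lemma gw0_small (eps : R) : 0 < eps -> exists r, gw r (0 : R) < eps.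
Proof.
move=> e0.
have hi : has_inf (range (fun r => gw r (0%:R : R))).
  split; first by exists (gw 0 (0%:R : R)), 0%N.
  exact: Gl_lb.
have [x [r _ <-] hx] := inf_adherent e0 hi.
exists r; move: hx; rewrite -/(Gl 0) Gl_rec0 Gl1_0 mul0r add0r //.
Qed.

End GW.

Lemma closure_approx (R : realType) (A : set R) t (e : R) : closure A t -> 0 < e ->
  exists t', A t' /\ `|t - t'| < e.
Proof.
move=> ct e0; have [t' [At' bt']] := ct _ (nbhsx_ballx t e e0).
by exists t'; split => //; move: bt'; rewrite -ball_normE.
Qed.

Lemma exists_delta (R : realType) (n : nat) (f : nat -> R) :
  (forall k, (1 <= k <= n)%N -> 0 < f k) ->
  exists2 e, 0 < e & forall k, (1 <= k <= n)%N -> e <= f k.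
Proof.
elim: n => [|n IH] hf.
  by exists 1 => // k /andP[k1 k0]; move: k1; rewrite leqNgt (leq_ltn_trans k0 (ltnSn 0)).
have [e e0 he] : exists2 e, 0 < e & forall k, (1 <= k <= n)%N -> e <= f k.
  apply: IH => k /andP[k1 kn]; apply: hf; rewrite k1 /= (leq_trans kn) //.
have fn : 0 < f n.+1 by apply: hf; rewrite /= leqnn.
exists (Num.min e (f n.+1)); first by rewrite lt_min e0 fn.
move=> k /andP[k1]; rewrite leq_eqVlt => /orP[/eqP ->|kn].
  by rewrite ge_min lexx orbT.
by rewrite ge_min he ?k1.
Qed.

Section Det.
Context d (T : measurableType d) (R : realType)
  (X : nat -> nat -> T -> R) (E : nat -> nat -> T -> R).

Definition Good (w : T) :=
  [/\ forall k l, (1 <= k)%N -> (1 <= l)%N -> 0 < E k l w,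
      forall k i, (1 <= k)%N -> X k i w = 1 \/ X k i w = -1 &
      forall k, (1 <= k)%N -> exists l, 1 < arrival E k l w].

Variable w : T.
Hypothesis Gw : Good w.

Notation S k m := (arrival E k m w).

Lemma S0 k : S k 0 = 0.
Proof. by rewrite /arrival big_geq. Qed.

Lemma S_le k a b : (1 <= k)%N -> (a <= b)%N -> S k a <= S k b.
Proof.
move=> k1 ab; apply: arrival_mono => // l /andP[l1 _]; apply/ltW.
by case: Gw => h _ _; apply: h.
Qed.

Lemma S_lt k a b : (1 <= k)%N -> (a < b)%N -> S k a < S k b.
Proof.
move=> k1 ab; apply: lt_le_trans (S_le k1 ab).
rewrite /arrival [X in _ < X]big_nat_recr //= ltrDl.
by case: Gw => h _ _; apply: h.
Qed.

Definition Npt k t m := S k m <= t < S k m.+1.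
Definition Lpt k t m := S k m < t <= S k m.+1.

Lemma Npt_uniq k t a b : (1 <= k)%N -> Npt k t a -> Npt k t b -> a = b.
Proof.
move=> k1 /andP[a1 a2] /andP[b1 b2].
case: (ltngtP a b) => // ab; exfalso.
- have := S_le k1 ab; move=> h; have := le_lt_trans b1 a2.
  by rewrite ltNge h.
- have := S_le k1 ab; move=> h; have := le_lt_trans a1 b2.
  by rewrite ltNge h.
Qed.

Lemma Npt_ex k t : (1 <= k)%N -> 0 <= t <= 1 -> exists m, Npt k t m.
Proof.
move=> k1 /andP[t0 t1].
have ex : exists l, t < S k l.
  case: Gw => _ _ /(_ k k1) [l hl]; exists l; exact: le_lt_trans t1 hl.
case: (ex_minnP ex) => l tl lmin.
case: l tl lmin => [|m] tl lmin.
  by move: tl; rewrite S0 ltNge t0.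
exists m; rewrite /Npt tl andbT leNgt; apply/negP => /lmin.
by rewrite ltnn.
Qed.

Lemma Lpt_ex k t : (1 <= k)%N -> 0 < t <= 1 -> exists m, Lpt k t m.
Proof.
move=> k1 /andP[t0 t1].
have ex : exists l, t <= S k l.
  case: Gw => _ _ /(_ k k1) [l hl]; exists l; apply/ltW; exact: le_lt_trans t1 hl.
case: (ex_minnP ex) => l tl lmin.
case: l tl lmin => [|m] tl lmin.
  by move: tl; rewrite S0 leNgt t0.
exists m; rewrite /Lpt tl andbT ltNge; apply/negP => /lmin.
by rewrite ltnn.
Qed.

Lemma poissonN_eq k t m : (1 <= k)%N -> Npt k t m -> poissonN E k t w = m.
Proof.
move=> k1 hm; rewrite /poissonN.
have ex : exists i, [set i | S k i <= t < S k i.+1] i by exists m.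
have := xgetPex 0%N ex => /= h.
exact: Npt_uniq k1 h hm.
Qed.

Lemma Npt_of_ex k t : (1 <= k)%N -> 0 <= t <= 1 -> Npt k t (poissonN E k t w).
Proof.
move=> k1 t01; have [m hm] := Npt_ex k1 t01.
by rewrite (poissonN_eq k1 hm).
Qed.

Definition Lidx (t : R) (k : nat) : nat := xget 0%N [set m | Lpt k t m].

Lemma Lidx_spec k t : (1 <= k)%N -> 0 < t <= 1 -> Lpt k t (Lidx t k).
Proof.
move=> k1 t01; have [m hm] := Lpt_ex k1 t01.
have ex : exists i, [set m | Lpt k t m] i by exists m.
exact: (xgetPex 0%N ex).
Qed.

Definition Zleft (L : nat -> nat) (n : nat) : R :=
  \sum_(1 <= k < n.+1) \prod_(1 <= j < k.+1) X j (L j) w.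

Lemma Zn_eq n t (L : nat -> nat) : 0 <= t <= 1 ->
  (forall k, (1 <= k <= n)%N -> Npt k t (L k)) ->
  forall l, (l <= n)%N -> Zn X E l t w = Zleft L l.
Proof.
move=> t01 hL l ln; rewrite /Zn /Zleft.
apply: eq_big_nat => k /andP[k1 kl]; apply: eq_big_nat => j /andP[j1 jk].
rewrite /Xt (poissonN_eq j1 (hL j _)) //.
by rewrite j1 /= -ltnS (leq_trans jk) // (leq_trans kl) // ltnS.
Qed.

Definition leftgood alpha n t :=
  forall l, (1 <= l <= n)%N -> l%:R `^ alpha <= Zleft (Lidx t) l.

Lemma clos01 alpha n t : closure (Tset X E alpha n w) t -> 0 <= t <= 1.
Proof.
move=> ct; apply/andP; split; rewrite leNgt; apply/negP => ht.
- have [t' [[/= t'01 _] dt]] := closure_approx ct (e := - t) ltac:(lra).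
  move: t'01; rewrite in_itv /= => /andP[t'0 _].
  move: dt; rewrite ltr_norml; lra.
- have [t' [[/= t'01 _] dt]] := closure_approx ct (e := t - 1) ltac:(lra).
  move: t'01; rewrite in_itv /= => /andP[_ t'1].
  move: dt; rewrite ltr_norml; lra.
Qed.

Lemma clos_step alpha n t : (1 <= n)%N -> closure (Tset X E alpha n w) t ->
  Tset X E alpha n w t \/ (0 < t /\ leftgood alpha n t).
Proof.
move=> n1 ct; have t01 := clos01 ct.
pose N k := poissonN E k t w.
have hN k : (1 <= k)%N -> Npt k t (N k) by move=> k1; exact: Npt_of_ex.
have [eR eR0 heR] : exists2 e, 0 < e & forall k, (1 <= k <= n)%N -> e <= S k (N k).+1 - t.
  apply: exists_delta => k /andP[k1 _]; have /andP[_ h] := hN k k1; lra.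
have right_case t' : Tset X E alpha n w t' -> t <= t' -> t' < t + eR -> Tset X E alpha n w t.
  move=> [/= t'01 Pt'] tt' t'e; split => //=.
  move=> l /andP[l1 ln].
  have t'01' : 0 <= t' <= 1 by move: t'01; rewrite in_itv.
  rewrite (@Zn_eq n t N) //; last by move=> k /andP[k1 _]; exact: hN.
  rewrite -(@Zn_eq n t' N) //; first by apply: Pt'; rewrite l1.
  move=> k /andP[k1 kn]; have /andP[h1 h2] := hN k k1; have := heR k; rewrite k1 kn => /(_ isT) he.
  rewrite /Npt (le_trans h1 tt') /=; lra.
case: (boolP (0 < t)) => tpos; last first.
  have [t' [Tt' dt]] := closure_approx ct eR0.
  left; apply: (right_case t' Tt').
  - move: Tt' => [/= t'01 _]; move: t'01; rewrite in_itv /= => /andP[t'0 _]; lra.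
  - move: dt; rewrite ltr_norml; lra.
have tL : 0 < t <= 1 by rewrite tpos; case/andP: t01.
have [eL eL0 heL] : exists2 e, 0 < e & forall k, (1 <= k <= n)%N -> e <= t - S k (Lidx t k).
  apply: exists_delta => k /andP[k1 _]; have /andP[h _] := Lidx_spec k1 tL; lra.
have e0 : 0 < Num.min eR eL by rewrite lt_min eR0 eL0.
have [t' [Tt' dt]] := closure_approx ct e0.
move: dt; rewrite ltr_norml => /andP[dt1 dt2].
have m1 := ge_min eR eL; have m2 := ge_min eR eL.
have hmin1 : Num.min eR eL <= eR by rewrite ge_min lexx.
have hmin2 : Num.min eR eL <= eL by rewrite ge_min lexx orbT.
case: (leP t t') => tt'.
  left; apply: (right_case t' Tt') => //; lra.
right; split => // l /andP[l1 ln].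
move: Tt' => [/= t'01 Pt'].
have t'01' : 0 <= t' <= 1 by move: t'01; rewrite in_itv.
rewrite -(@Zn_eq n t' (Lidx t)) //; first by apply: Pt'; rewrite l1.
move=> k /andP[k1 kn]; have /andP[h1 h2] := Lidx_spec k1 tL.
have := heL k; rewrite k1 kn => /(_ isT) he.
rewrite /Npt; apply/andP; split; lra.
Qed.

Lemma leftgood_mono alpha n m t : (m <= n)%N -> leftgood alpha n t -> leftgood alpha m t.
Proof.
move=> mn h l /andP[l1 lm]; apply: h; by rewrite l1 (leq_trans lm).
Qed.

Lemma Tset_mono alpha n m t : (m <= n)%N -> Tset X E alpha n w t -> Tset X E alpha m w t.
Proof.
move=> mn [h1 h2]; split => // l /andP[l1 lm]; apply: h2; by rewrite l1 (leq_trans lm).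
Qed.

Lemma main_det alpha t : (forall n, (1 <= n)%N -> closure (Tset X E alpha n w) t) ->
  (forall n, (1 <= n)%N -> Tset X E alpha n w t) \/
  exists j i, [/\ (1 <= j)%N, (1 <= i)%N, t = S j i, 0 < t <= 1 &
     forall n, leftgood alpha n t].
Proof.
move=> hcl.
have t01 := clos01 (hcl 1%N isT).
case: (pselect (forall n, (1 <= n)%N -> Tset X E alpha n w t)) => [h|h]; first by left.
right.
have [m0 hm0] : exists m0, ~ ((1 <= m0)%N -> Tset X E alpha m0 w t).
  by apply/existsNP.
have m01 : (1 <= m0)%N by apply: contra_notP hm0 => /negP; rewrite -ltnNge ltnS leqn0 => /eqP ->.
have nT : ~ Tset X E alpha m0 w t by move=> ?; apply: hm0.
have hn n : (m0 <= n)%N -> 0 < t /\ leftgood alpha n t.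
  move=> mn; have [|//] := clos_step (leq_trans m01 mn) (hcl n (leq_trans m01 mn)).
  by move=> /(Tset_mono mn).
have tpos : 0 < t by have [] := hn m0 (leqnn m0).
have lg n : leftgood alpha n t.
  have [_ ] := hn (maxn n m0) (leq_maxr _ _); apply: leftgood_mono; exact: leq_maxl.
have tL : 0 < t <= 1 by rewrite tpos; case/andP: t01.
have [k hk] : exists k, ~ ((1 <= k <= m0)%N -> poissonN E k t w = Lidx t k).
  apply/existsNP => hall; apply: nT; split; first by rewrite in_itv.
  move=> l /andP[l1 lm]; apply: le_trans (lg m0 l _) _; first by rewrite l1.
  rewrite le_eqVlt; apply/orP; left; apply/eqP/esym.
  rewrite /Zn /Zleft; apply: eq_big_nat => k' /andP[k1 kl]; apply: eq_big_nat => j /andP[j1 jk].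
  rewrite /Xt hall // j1 /= -ltnS (leq_trans jk) // (leq_trans kl) // ltnS //.
have k1 : (1 <= k <= m0)%N by apply/negPn/negP => nk; apply: hk => kk; by rewrite kk in nk.
have k1' : (1 <= k)%N by case/andP: k1.
have hne : poissonN E k t w <> Lidx t k by move=> e; apply: hk.
have /andP[hL1 hL2] := Lidx_spec k1' tL.
exists k, (Lidx t k).+1; split => //.
apply/eqP; rewrite eq_le hL2 /= leNgt; apply/negP => tlt.
by apply: hne; apply: poissonN_eq => //; rewrite /Npt (ltW hL1) tlt.
Qed.

Lemma sum_split (x : nat -> R) (c : R) k l : (k <= l)%N ->
  \sum_(k <= k' < l.+1) c * \prod_(k <= j < k'.+1) x j =
  c * x k + \sum_(k.+1 <= k' < l.+1) (c * x k) * \prod_(k.+1 <= j < k'.+1) x j.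
Proof.
move=> kl; rewrite big_ltn ?ltnS // big_nat1; congr (_ + _).
apply: eq_big_nat => k' /andP[kk' _]; rewrite big_ltn ?ltnS ?(ltnW kk') //.
by rewrite mulrA.
Qed.

Lemma V_intro (tau : T -> R) t (L : nat -> nat) : tau w = t ->
  (forall k, (1 <= k)%N -> Lpt k t (L k)) -> forall r k h c, (1 <= k)%N ->
  (forall l, (k <= l < k + r)%N ->
     1 <= h + \sum_(k <= k' < l.+1) c * \prod_(k <= j < k'.+1) X j (L j) w) ->
  V X E tau r k h c w.
Proof.
move=> htau hL; elim=> [|r IH] k h c k1 hyp //=.
have hk : (k <= k < k + r.+1)%N by rewrite leqnn /= -addn1 leq_add2l.
have := hyp k hk; rewrite sum_split // big_geq // addr0 => hkk.
exists (L k) => //; split.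
  have /andP[h1 h2] := hL k k1; split; last by rewrite htau h1 h2.
  by move=> l /andP[l1 _]; case: Gw => hp _ _; apply: hp.
have hrest s : X k (L k) w = s -> forall l, (k.+1 <= l < k.+1 + r)%N ->
    1 <= (h + c * s) + \sum_(k.+1 <= k' < l.+1) (c * s) * \prod_(k.+1 <= j < k'.+1) X j (L j) w.
  move=> hs l /andP[kl lr].
  have := hyp l; rewrite (ltnW kl) /= addnS -addSn lr => /(_ isT).
  by rewrite sum_split ?(ltnW kl) // hs addrA.
case: Gw => _ hX _; case: (hX k (L k) k1) => hx.
- left; split; first split.
  + by rewrite /= hx.
  + by move: hkk; rewrite hx mulr1.
  + apply: IH => //; move: (hrest 1 hx); by rewrite mulr1.
- right; split; first split.
  + by rewrite /= hx.
  + by move: hkk; rewrite hx mulrN1.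
  + apply: IH => //; move: (hrest (-1) hx); by rewrite mulrN1.
Qed.

Lemma V_all alpha t j i : 0 <= alpha -> (1 <= j)%N -> t = S j i -> 0 < t <= 1 ->
  (forall n, leftgood alpha n t) -> forall n, V X E (arrival E j i) n 1 0 1 w.
Proof.
move=> ha j1 ht tL lg n.
apply: (@V_intro _ t (Lidx t)) => //.
  by move=> k k1; exact: Lidx_spec.
move=> l /andP[l1 ln].
have := lg n l; rewrite l1 /= -ltnS -(add1n n) ln => /(_ isT) hl.
rewrite add0r; under eq_bigr do rewrite mul1r.
apply: le_trans hl.
have l1R : 1 <= (l%:R : R) by rewrite ler1n.
rewrite -{1}(powRr0 (l%:R : R)); exact: ler_powR.
Qed.

End Det.

Section Null.
Context d (T : measurableType d) (R : realType) (P : probability T R)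
  (X : nat -> nat -> T -> R) (E : nat -> nat -> T -> R).
Hypothesis Hind : mutually_independent P valid_idx (rv_family X E).
Hypothesis HX1 : forall j i, (1 <= j)%N -> P (X j i @^-1` [set 1]) = (2^-1)%:E.
Hypothesis HXm1 : forall j i, (1 <= j)%N -> P (X j i @^-1` [set -1]) = (2^-1)%:E.
Hypothesis HE : forall j k, (1 <= j)%N -> (1 <= k)%N ->
          forall s : R, 0 <= s -> P (E j k @^-1` `]s, +oo[) = (expR (- s))%:E.

Lemma null_small (A : set T) : measurable A -> (forall e : R, 0 < e -> (P A <= e%:E)%E) -> P A = 0%E.
Proof.
move=> mA h; have := Pfin P mA; move/fineK => <-.
have p0 : 0 <= fine (P A) by apply: fine_ge0; exact: measure_ge0.
congr EFin; apply/eqP; rewrite eq_le p0 andbT leNgt; apply/negP => pp.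
have := h (fine (P A) / 2) ltac:(lra).
rewrite -{1}(fineK (Pfin P mA)) lee_fin; lra.
Qed.

Lemma Emeas k l : (1 <= k)%N -> (1 <= l)%N -> measurable_fun setT (E k l).
Proof. by move=> k1 l1; apply: (Hind.1 (inr (k, l))); rewrite /= k1 l1. Qed.

Lemma Epre_meas k l (B : set R) : (1 <= k)%N -> (1 <= l)%N -> measurable B -> measurable (E k l @^-1` B).
Proof. move=> k1 l1 mB; have := Emeas k1 l1 measurableT mB; by rewrite setTI. Qed.

Lemma Ele_eq k l (s : R) : E k l @^-1` [set x | x <= s] = ~` (E k l @^-1` `]s, +oo[).
Proof.
apply/seteqP; split => w /=; rewrite in_itv /= andbT.
  by move=> h1 h2; move: h1; rewrite leNgt h2.
by move/negP; rewrite -leNgt.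
Qed.

Lemma Ele_meas k l (s : R) : (1 <= k)%N -> (1 <= l)%N -> measurable (E k l @^-1` [set x | x <= s]).
Proof.
move=> k1 l1; rewrite Ele_eq; apply: measurableC; apply: Epre_meas => //.
Qed.

Lemma PEgt k l (s : R) : (1 <= k)%N -> (1 <= l)%N -> 0 <= s ->
  P (E k l @^-1` [set x | x <= s]) = (1 - expR (- s))%:E.
Proof.
move=> k1 l1 s0; rewrite Ele_eq probability_setC; last first.
  by apply: Epre_meas => //; exact: measurable_itv.
by rewrite HE // EFinB.
Qed.

Lemma neg_E0 k l : (1 <= k)%N -> (1 <= l)%N -> P.-negligible (E k l @^-1` [set x | x <= 0]).
Proof.
move=> k1 l1; apply/negligibleP; first exact: Ele_meas.
by apply: eq_trans (PEgt _ _ _) _ => //; rewrite oppr0 expR0 subrr.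
Qed.

Lemma neg_X k i : (1 <= k)%N -> P.-negligible [set w | X k i w <> 1 /\ X k i w <> -1].
Proof.
move=> k1.
have m1 : measurable (X k i @^-1` [set 1]) by exact: (Xpre_meas Hind).
have m2 : measurable (X k i @^-1` [set -1]) by exact: (Xpre_meas Hind).
have dis : X k i @^-1` [set 1] `&` X k i @^-1` [set -1] = set0.
  apply/seteqP; split => w // [/= h1 h2]; move: h2; rewrite h1 => /eqP.
  rewrite -subr_eq0 opprK (_ : 1 + 1 = 2 :> R) // pnatr_eq0 //.
exists (~` (X k i @^-1` [set 1] `|` X k i @^-1` [set -1])); split.
- exact/measurableC/measurableU.
- rewrite probability_setC; last exact: measurableU.
  have -> : P (X k i @^-1` [set 1] `|` X k i @^-1` [set -1]) = 1%:E.
    apply: eq_trans (measureU _ m1 m2 dis) _.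
    apply: eq_trans (congr2 (fun a b => (a + b)%E) (HX1 i k1) (HXm1 i k1)) _.
    by rewrite -EFinD (_ : 2^-1 + 2^-1 = 1 :> R) //; field.
  by rewrite subee.
- by move=> w [h1 h2] [].
Qed.

Lemma prod_cst (c : R) (s : seq nat) : (\prod_(l <- s) c%:E)%E = (c ^+ size s)%:E.
Proof.
elim: s => [|a s IH]; first by rewrite big_nil.
by rewrite big_cons IH -EFinM /= exprS.
Qed.

Lemma small_pow (c e : R) : 0 <= c < 1 -> 0 < e -> exists L, c ^+ L < e.
Proof.
move=> /andP[c0 c1] e0.
have hc : `|c| < 1 by rewrite ger0_norm.
have [L _ hL] := cvg_expr hc (nbhsx_ballx 0 e e0).
exists L; have := hL L (leqnn L); rewrite -ball_normE /= sub0r normrN.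
by move/(le_lt_trans (ler_norm _)).
Qed.

Lemma neg_unb k : (1 <= k)%N -> P.-negligible [set w | forall l, (1 <= l)%N -> E k l w <= 1].
Proof.
move=> k1.
set c := 1 - expR (- 1 : R).
have hc : 0 <= c < 1.
  rewrite /c; have := expR_gt0 (-1 : R); have : expR (-1 : R) < 1 by rewrite expR_lt1; lra.
  move=> h1 h2; apply/andP; split; lra.
set B := \bigcap_(l in [set l | (1 <= l)%N]) E k l @^-1` [set x | x <= 1].
have mB : measurable B by apply: bigcap_measurableType => l /= l1; exact: Ele_meas.
exists B; split => //; try by move=> w /= h l /= l1; exact: h.
apply: null_small => // e e0.
have [L hL] := small_pow hc e0.
pose s := [seq inr (k, l) | l <- iota 1 L] : seq idx.
have PA : P (\bigcap_(i in [set` s]) (rv_family X E i @^-1` [set x | x <= 1])) = (c ^+ L)%:E.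
  rewrite Hind.2.
  - rewrite big_map.
    apply: eq_trans (_ : (\prod_(l <- iota 1 L) c%:E)%E = _); last by rewrite prod_cst size_iota.
    apply: eq_big_seq => l; rewrite mem_iota => /andP[l1 _] /=.
    exact: PEgt.
  - by rewrite map_inj_uniq ?iota_uniq // => a b [].
  - by apply/allP => x /mapP [l]; rewrite mem_iota => /andP[l1 _] -> /=; rewrite k1 l1.
  - move=> _; rewrite (_ : [set x : R | x <= 1] = `]-oo, 1]%classic); first exact: measurable_itv.
    by apply/seteqP; split => x /=; rewrite in_itv.
have PB : (P B <= P (\bigcap_(i in [set` s]) (rv_family X E i @^-1` [set x : R | (x <= 1)%R])))%E.
  apply: le_measure; rewrite ?inE //.
  - apply: fin_bigcap_measurable; first exact: finite_seq.
    move=> x /= /mapP [l]; rewrite mem_iota => /andP[l1 _] -> /=; exact: Ele_meas.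
  - move=> w Bw x /= /mapP [l]; rewrite mem_iota => /andP[l1 _] -> /=; exact: Bw.
apply: (le_trans PB).
by rewrite PA lee_fin ltW.
Qed.

Lemma neg_Good : P.-negligible (~` [set w | Good X E w]).
Proof.
pose U := ((\bigcup_k \bigcup_l E k.+1 l.+1 @^-1` [set x | x <= 0]) `|`
   (\bigcup_k \bigcup_i [set w | X k.+1 i w <> 1 /\ X k.+1 i w <> -1])) `|`
   (\bigcup_k [set w | forall l, (1 <= l)%N -> E k.+1 l w <= 1]).
apply: (@negligibleS _ _ _ _ U).
  move=> w nG; apply: contrapT => nU; apply: nG.
  have g1 : forall k l, (1 <= k)%N -> (1 <= l)%N -> 0 < E k l w.
    move=> k l k1 l1; rewrite ltNge; apply/negP => h; apply: nU; left; left.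
    exists k.-1 => //; exists l.-1 => //; by rewrite /= !prednK.
  split => //.
  - move=> k i k1; apply: contrapT => h; apply: nU; left; right.
    exists k.-1 => //; exists i => //; rewrite /= prednK //.
    by split => e; apply: h; [left|right].
  - move=> k k1; apply: contrapT => h.
    have h' : ~ (forall l, (1 <= l)%N -> E k l w <= 1).
      move=> hall; apply: nU; right; exists k.-1 => //; by rewrite /= prednK.
    apply: h'; move=> l l1; rewrite leNgt; apply/negP => El.
    apply: h; exists l.
    refine (lt_le_trans El _).
    case: l l1 El => // l _ _.
    rewrite /arrival big_nat_recr //= lerDr.
    have a0 : arrival E k 0 w = 0 by rewrite /arrival big_geq.
    rewrite -[X in X <= _]a0.
    apply: arrival_mono => // l' /andP[l'1 _]; apply/ltW; exact: g1.
apply: negligibleU; first apply: negligibleU.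
- apply: negligible_bigcup => k; apply: negligible_bigcup => l; exact: neg_E0.
- apply: negligible_bigcup => k; apply: negligible_bigcup => i; exact: neg_X.
- apply: negligible_bigcup => k; exact: neg_unb.
Qed.

Lemma neg_V j i : (1 <= j)%N -> P.-negligible (\bigcap_n V X E (arrival E j i) n 1%N 0 1).
Proof.
move=> j1.
have Htau : forall Ex : pred idx, noE Ex ->
    measurable_fun ([set: GT X E Ex] : set (GT X E Ex)) (arrival E j i).
  by move=> Ex nE; exact: arrival_mfun.
have mV n : measurable (V X E (arrival E j i) n 1%N 0 1) by exact: (V_meas Hind Htau).
have mB : measurable (\bigcap_n V X E (arrival E j i) n 1%N 0 1) by exact: bigcapT_measurable.
exists (\bigcap_n V X E (arrival E j i) n 1%N 0 1); split => //.
apply: null_small => // e e0.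
have [r hr] := gw0_small e0.
have h1 : (P (\bigcap_n V X E (arrival E j i) n 1%N 0 1) <= P (V X E (arrival E j i) r 1%N 0 1))%E.
  by apply: le_measure; rewrite ?inE // => w hw; exact: hw.
apply: (le_trans h1).
have := V_bound Hind HX1 HXm1 Htau r (k := 1%N) 0 (c := 1) (C := setT) isT (or_introl erefl) measurableT.
rewrite setTI probability_setT mul1e => h2.
apply: (le_trans h2); rewrite lee_fin; exact: ltW.
Qed.

End Null.

Unset Implicit Arguments. Set Strict Implicit.

Theorem lemma9 (d : measure_display) (T : measurableType d) (R : realType)
  (P : probability T R) (X : nat -> nat -> T -> R) (E : nat -> nat -> T -> R)
  (Hind : mutually_independent P valid_idx (rv_family X E))
  (HX1 : forall j i, (1 <= j)%N -> P (X j i @^-1` [set 1]) = (2^-1)%:E)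
  (HXm1 : forall j i, (1 <= j)%N -> P (X j i @^-1` [set -1]) = (2^-1)%:E)
  (HE : forall j k, (1 <= j)%N -> (1 <= k)%N ->
          forall s : R, 0 <= s -> P (E j k @^-1` `]s, +oo[) = (expR (- s))%:E)
  (alpha : R) (Halpha : 0 <= alpha) :
  {ae P, forall w,
     \bigcap_(n in [set n : nat | (1 <= n)%N]) closure (Tset X E alpha n w) =
     \bigcap_(n in [set n : nat | (1 <= n)%N]) Tset X E alpha n w}.
Proof.
pose BadV := \bigcup_j \bigcup_i (\bigcap_n V X E (arrival E j.+1 i.+1) n 1%N 0 1).
have nBad : P.-negligible (~` [set w | Good X E w] `|` BadV).
  apply: negligibleU; first exact: (neg_Good Hind HX1 HXm1 HE).
  apply: negligible_bigcup => j; apply: negligible_bigcup => i.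
  exact: (neg_V Hind HX1 HXm1).
apply: (negligibleS _ nBad) => w /= hw.
apply: contrapT => hnot; apply: hw.
have Gw : Good X E w by apply: contrapT => ng; apply: hnot; left.
apply/seteqP; split => t /= ht; last first.
  by move=> n n1; apply: subset_closure; exact: ht.
case: (main_det Gw ht) => [h|[j [i [j1 i1 tji tL lg]]]]; first exact: h.
exfalso; apply: hnot; right.
exists j.-1 => //; exists i.-1 => //; rewrite !prednK //.
move=> n _; exact: (V_all Gw Halpha j1 tji tL lg).
Qed.
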